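(* Every irreducible SDAN contains only one atom.
   Context: Fix a finite nonempty set $A$ of agents; each $a\in A$ has a nonempty set $Q_a$ of internal states, $Q_A=\prod_{a\in A}Q_a$. A transformer is a left-total relation on $Q_A$; for $S\subseteq A$ an $S$-transformer is one with $(q,q')\in\tau\Rightarrow q_a=q'_a$ for all $a\notin S$. An atom is $n=(P_n,R_n,\delta_n)$: $P_n\subseteq A$ nonempty (parties), $R_n$ finite nonempty (outcomes), $\delta_n$ assigns to each $r\in R_n$ a $P_n$-transformer $\langle n,r\rangle$. A negotiation is $\mathcal N=(N,n_0,n_f,\mathcal X)$ with $N$ a finite set of atoms, $n_0,n_f\in N$ (possibly equal), $T(N)=\{(n,a,r): n\in N,a\in P_n,r\in R_n\}$, $\mathcal X:T(N)\to 2^N$, such that every agent is a party of $n_0$ and of $n_f$, and $\mathcal X(n,a,r)=\emptyset$ iff $n=n_f$. Its graph has vertices $N$ and edges $(n,n')$ whenever $n'\in\mathcal X(n,a,r)$ for some $(n,a,r)$; $\mathcal N$ is acyclic if the graph has no cycle. A marking is $x:A\to 2^N$; initial $x_0(a)=\{n_0\}$, final $x_f(a)=\emptyset$. $x$ enables $n$ if $n\in x(a)$ for all $a\in P_n$; then for $r\in R_n$ the step $(n,r)$ leads to $x'$ with $x'(a)=\mathcal X(n,a,r)$ for $a\in P_n$, $x'(a)=x(a)$ otherwise. A large step is a finite occurrence sequence from $x_0$ to $x_f$. $\mathcal N$ is sound if every atom is enabled at some reachable marking and every occurrence sequence from $x_0$ is a large step or can be extended to one. An agent $a$ is deterministic if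 for each $(n,a,r)\in T(N)$ with $n\ne n_f$, $\mathcal X(n,a,r)$ is a singleton; $\mathcal N$ is deterministic if all agents are deterministic. An SDAN is a sound, deterministic, acyclic negotiation. Merge rule. Guard: some atom $n$ has distinct outcomes $r_1,r_2$ with $\mathcal X(n,a,r_1)=\mathcal X(n,a,r_2)$ for all $a\in P_n$. Action: replace $r_1,r_2$ in $R_n$ by a fresh outcome $r_f$ with $\mathcal X(n,a,r_f)=\mathcal X(n,a,r_1)$ for $a\in P_n$ and $\langle n,r_f\rangle=\langle n,r_1\rangle\cup\langle n,r_2\rangle$. $(n,r)$ unconditionally enables $n'$ if $P_n\supseteq P_{n'}$ and $\mathcal X(n,a,r)=\{n'\}$ for all $a\in P_{n'}$. d-shortcut rule. Guard: atoms $n\neq n'$ and $r\in R_n$ such that $(n,r)$ unconditionally enables $n'$; $n'$ has at most one outcome; and if $n'\in\mathcal X(\tilde n,\tilde a,\tilde r)$ for at least one $(\tilde n,\tilde a,\tilde r)\in T(N)$ with $\tilde n\neq n$, then $\{n'\}=\mathcal X(\tilde n,\tilde a,\tilde r)$ for some $(\tilde n,\tilde a,\tilde r)\in T(N)$ with $\tilde n\ne n$. Action: (1) replace $R_n$ by $(R_n\setminus\{r\})\cup\{r'_f:r'\in R_{n'}\}$ with fresh names; (2) for $a\in P_{n'}$ set $\mathcal X(n,a,r'_f)=\mathcal X(n',a,r')$, for $a\in P_n\setminus P_{n'}$ set $\mathcal X(n,a,r'_f)=\mathcal X(n,a,r)$; (3) $\langle n,r'_f\rangle=\langle n,r\rangle\langle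 n',r'\rangle$ (relational composition); (4) if afterwards $n'\notin\mathcal X(\tilde n,\tilde a,\tilde r)$ for all $(\tilde n,\tilde a,\tilde r)\in T(N)$, remove $n'$. An SDAN is irreducible if neither the merge rule nor the d-shortcut rule can be applied to it. *)

(* Defs.v *)
From mathcomp Require Import all_boot.
Set Implicit Arguments. Unset Strict Implicit. Unset Printing Implicit Defensive.

(* Negotiations over a finite agent type [A], a finite type [Nt] whose
   elements are exactly the atoms of the negotiation, and a finite universe
   [Out] of outcome names (each atom n has its own finite set [R n] of
   outcomes, a nonempty subset of [Out]).  [Qa a] is the (nonempty) type of
   internal states of agent [a]; global states are [Q Qa]. *)

Definition Q (A : finType) (Qa : A -> Type) := forall a : A, Qa a.

Definition left_total (X : Type) (tr : X -> X -> Prop) :=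
  forall q, exists q', tr q q'.

Definition S_transformer (A : finType) (Qa : A -> Type) (S : {set A})
    (tr : Q Qa -> Q Qa -> Prop) :=
  left_total tr /\ forall q q', tr q q' -> forall a, a \notin S -> q a = q' a.

Record negotiation (A Nt Out : finType) (Qa : A -> Type) := Negotiation {
  P : Nt -> {set A};
  R : Nt -> {set Out};
  delta : Nt -> Out -> Q Qa -> Q Qa -> Prop;
  X : Nt -> A -> Out -> {set Nt};
  n0 : Nt;
  nf : Nt;
  agents_nonempty : 0 < #|A|;
  states_nonempty : forall a, inhabited (Qa a);
  P_nonempty : forall n, P n != set0;
  R_nonempty : forall n, R n != set0;
  delta_ok : forall n r, r \in R n -> S_transformer (P n) (delta n r);
  P_n0 : forall a, a \in P n0;
  P_nf : forall a, a \in P nf;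
  X_empty : forall n a r, a \in P n -> r \in R n -> (X n a r == set0) = (n == nf)
}.

Section Negotiations.
Variables (A Nt Out : finType) (Qa : A -> Type) (N : @negotiation A Nt Out Qa).

Definition inT (n : Nt) (a : A) (r : Out) := (a \in P N n) && (r \in R N n).

Definition gedge : rel Nt :=
  fun n n' => [exists a, exists r, inT n a r && (n' \in X N n a r)].

Definition acyclic := forall n n', gedge n n' -> ~~ connect gedge n' n.

Definition marking := {ffun A -> {set Nt}}.
Definition x0 : marking := [ffun _ => [set n0 N]].
Definition xf : marking := [ffun _ => set0].

Definition enabled (x : marking) (n : Nt) := forall a, a \in P N n -> n \in x a.

Definition fire (x : marking) (n : Nt) (r : Out) : marking :=
  [ffun a => if a \in P N n then X N n a r else x a].

Fixpoint occurs (x : marking) (s : seq (Nt * Out)) (y : marking) : Prop :=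
  match s with
  | [::] => y = x
  | (n, r) :: s' => [/\ enabled x n, r \in R N n & occurs (fire x n r) s' y]
  end.

Definition large_step (s : seq (Nt * Out)) := occurs x0 s xf.

Definition sound :=
  (forall n, exists s x, occurs x0 s x /\ enabled x n) /\
  (forall s x, occurs x0 s x -> large_step s \/ exists s', large_step (s ++ s')).

Definition deterministic :=
  forall n a r, inT n a r -> n != nf N -> #|X N n a r| = 1.

Definition SDAN := [/\ sound, deterministic & acyclic].

Definition merge_applicable :=
  exists n r1 r2, [/\ r1 \in R N n, r2 \in R N n, r1 != r2 &
    forall a, a \in P N n -> X N n a r1 = X N n a r2].

Definition uncond_enables (n : Nt) (r : Out) (n' : Nt) :=
  P N n' \subset P N n /\ forall a, a \in P N n' -> X N n a r = [set n'].

Definition dshortcut_applicable :=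
  exists n n' r, [/\ n != n', r \in R N n, uncond_enables n r n',
    #|R N n'| <= 1 &
    (exists nt a_t rt, [/\ inT nt a_t rt, nt != n & n' \in X N nt a_t rt]) ->
    (exists nt a_t rt, [/\ inT nt a_t rt, nt != n & X N nt a_t rt = [set n']])].

Definition irreducible := ~ merge_applicable /\ ~ dshortcut_applicable.

End Negotiations.

(* Main.v *)
Require Import Defs.
From mathcomp Require Import all_boot.
From Stdlib Require Import Classical.
From mathcomp Require Import zify.
From Stdlib Require Import Lia.
Set Implicit Arguments. Unset Strict Implicit. Unset Printing Implicit Defensive.

Lemma ex_min (T : Type) (Pr : T -> Prop) (f : T -> nat) :
  (exists x, Pr x) -> exists x, Pr x /\ forall y, Pr y -> f x <= f y.
Proof.
case=> x0 Hx0; suff: forall k x, Pr x -> f x <= k ->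
  exists x, Pr x /\ forall y, Pr y -> f x <= f y by move/(_ _ x0 Hx0 (leqnn _)).
elim=> [|k IH] x Hx Hk.
  by exists x; split => // y _; move: Hk; rewrite leqn0 => /eqP ->.
case: (classic (forall y, Pr y -> f x <= f y)) => [H|]; first by exists x.
move/not_all_ex_not => [y Hy']; have [Hy Hn] := imply_to_and _ _ Hy'.
have Hlt : f y < f x by rewrite ltnNge; apply/negP.
by apply: (IH y Hy); rewrite -ltnS; apply: leq_trans Hlt Hk.
Qed.


Section S.
Variables (A Nt Out : finType) (Qa : A -> Type) (N : @negotiation A Nt Out Qa).
Hypothesis Hdet : deterministic N.

Definition wf (z : marking A Nt) := forall d, #|z d| <= 1.

Lemma X_card n a r : a \in P N n -> r \in R N n -> #|X N n a r| <= 1.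
Proof.
move=> Ha Hr; case: (eqVneq n (nf N)) => [e|ne].
  by move: (X_empty Ha Hr); rewrite e eqxx => /eqP ->; rewrite cards0.
by rewrite Hdet // /inT Ha Hr.
Qed.

Lemma X_single n a r : a \in P N n -> r \in R N n -> forall m, m \in X N n a r -> X N n a r = [set m].
Proof.
move=> Ha Hr m Hm; have := X_card Ha Hr.
rewrite leq_eqVlt ltnS leqn0 cards_eq0 => /orP [/cards1P [m' Em]|/eqP E].
  by move: Hm; rewrite Em in_set1 => /eqP ->.
by move: Hm; rewrite E inE.
Qed.

Lemma fire_wf z n r : wf z -> r \in R N n -> wf (fire N z n r).
Proof. by move=> Hz Hr d; rewrite /fire ffunE; case: ifP => // Hd; apply: X_card. Qed.

Lemma occurs_wf z s w : wf z -> occurs N z s w -> wf w.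
Proof.
elim: s z => [|[n r] s IH] z Hz /=; first by move=> ->.
by case=> _ Hr Ho; apply: (IH _ (fire_wf Hz Hr) Ho).
Qed.

Lemma x0_wf : wf (x0 N).
Proof. by move=> d; rewrite /x0 ffunE cards1. Qed.

Lemma occurs_cat x s1 s2 w :
  occurs N x (s1 ++ s2) w <-> exists y, occurs N x s1 y /\ occurs N y s2 w.
Proof.
elim: s1 x => [|[n r] s IH] x /=.
  by split; [move=> H; exists x|case=> y [-> H]].
split.
  by case=> H1 H2 /IH [y [H3 H4]]; exists y.
by case=> y [[H1 H2 H3] H4]; split => //; apply/IH; exists y.
Qed.

Lemma occurs_fun x s y y' : occurs N x s y -> occurs N x s y' -> y = y'.
Proof.
elim: s x => [|[n r] s IH] x /=; first by move=> -> ->.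
by case=> _ _ H1 [_ _ H2]; apply: IH H1 H2.
Qed.

Lemma tok z s d m : wf z -> occurs N z s (xf A Nt) -> m \in z d ->
  exists r, (m, r) \in s /\ d \in P N m.
Proof.
elim: s z => [|[e r] s IH] z Hz /=.
  by move=> <-; rewrite /xf ffunE inE.
case=> He Hr Ho Hm; case Hd: (d \in P N e).
  have Hez := He d Hd.
  have : m = e.
    apply/eqP; move: (Hz d); rewrite leq_eqVlt ltnS leqn0 cards_eq0.
    case/orP => [/cards1P [k Ek]|/eqP E]; last by move: Hm; rewrite E inE.
    by move: Hm Hez; rewrite Ek !in_set1 => /eqP -> /eqP ->.
  by move=> ->; exists r; rewrite inE eqxx.
have Hm' : m \in fire N z e r d by rewrite /fire ffunE Hd.
have [r' [H1 H2]] := IH _ (fire_wf Hz Hr) Ho Hm'.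
by exists r'; rewrite inE H1 orbT.
Qed.

Lemma path_to z s w d e r : occurs N z s w -> (e, r) \in s -> d \in P N e ->
  exists2 m, m \in z d & connect (gedge N) m e.
Proof.
elim: s z => [|[e' r'] s IH] z //= [He' Hr' Ho].
rewrite inE => /orP [/eqP [Ee Er]|Hin] Hd.
  by subst; exists e' => //; apply: He'.
have [m Hm Hc] := IH _ Ho Hin Hd.
move: Hm; rewrite /fire ffunE; case: ifP => Hd' Hm; last by exists m.
exists e' => //; first by apply: He'.
apply: connect_trans Hc; apply: connect1.
by apply/existsP; exists d; apply/existsP; exists r'; rewrite /inT Hd' Hr' Hm.
Qed.

Lemma split_at z s w f rf : occurs N z s w -> (f, rf) \in s ->
  exists s1 s2 z', [/\ s = s1 ++ (f, rf) :: s2, occurs N z s1 z', enabled N z' f,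
     rf \in R N f & occurs N (fire N z' f rf) s2 w].
Proof.
elim: s z => [|[e' r'] s IH] z //= [He' Hr' Ho].
rewrite inE => /orP [/eqP [-> ->]|Hin].
  by exists [::], s, z.
have [s1 [s2 [z' [H0 H1 H2 H3 H4]]]] := IH _ Ho Hin.
by exists ((e', r') :: s1), s2, z'; rewrite H0.
Qed.


Hypothesis Hacyc : acyclic N.
Notation E := (gedge N).

Lemma acyc_eq u v : connect E u v -> connect E v u -> u = v.
Proof.
case/connectP => [[|w p] /= Hp ->] //; case/andP: Hp => Huw Hp.
move=> Hvu; have Hwv : connect E w (last w p) by apply/connectP; exists p.
by have := Hacyc Huw; rewrite (connect_trans Hwv Hvu).
Qed.

Definition h m := #|[set m' | connect E m m']|.

Lemma h_le u f : connect E u f -> h f <= h u.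
Proof.
move=> Huf; apply: subset_leq_card; apply/subsetP => m; rewrite !inE.
exact: connect_trans.
Qed.

Lemma h_lt f e : E f e -> h e < h f.
Proof.
move=> Hfe; apply: proper_card; apply/properP; split.
  apply/subsetP => m; rewrite !inE; apply: connect_trans; exact: connect1.
exists f; rewrite !inE ?connect0 //; exact: Hacyc.
Qed.

Lemma h_pos m : 0 < h m.
Proof. by apply/card_gt0P; exists m; rewrite inE connect0. Qed.

Hypothesis Hsound : sound N.
Hypothesis Hnomerge : ~ merge_applicable N.
Hypothesis Hnosc : ~ dshortcut_applicable N.

Notation xF := (xf A Nt).

Lemma cont s y : occurs N (x0 N) s y -> exists s', occurs N y s' xF.
Proof.
move=> Hs; case: (proj2 Hsound _ _ Hs) => [Hl|[s' Hl]].
  by exists [::]; rewrite /= (occurs_fun Hs Hl).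
case/occurs_cat: Hl => y' [H1 H2]; exists s'; by rewrite (occurs_fun Hs H1).
Qed.

Lemma reach_wf s y : occurs N (x0 N) s y -> wf y.
Proof. exact: occurs_wf x0_wf. Qed.

Lemma sc n n' r : n != n' -> r \in R N n -> uncond_enables N n r n' ->
  #|R N n'| <= 1 -> False.
Proof.
move=> H1 H2 H3 H4; apply: Hnosc; exists n, n', r; split => //.
case=> nt [a [rt [Hin Hne Hm]]]; exists nt, a, rt; split => //.
by case/andP: Hin => Ha Hr; apply: X_single Ha Hr _ Hm.
Qed.

Definition mu (z : marking A Nt) := \sum_(d : A) \max_(m in z d) h m.

Lemma pick_party e : exists d, d \in P N e.
Proof. by case/set0Pn: (P_nonempty N e) => d Hd; exists d. Qed.

Lemma pick_out e : exists r, r \in R N e.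
Proof. by case/set0Pn: (R_nonempty N e) => d Hd; exists d. Qed.

Lemma mu_fire z e r : enabled N z e -> r \in R N e -> mu (fire N z e r) < mu z.
Proof.
move=> He Hr; have [d0 Hd0] := pick_party e.
have Hlt d : d \in P N e -> \max_(m in X N e d r) h m < \max_(m in z d) h m.
  move=> Hd; apply: (@leq_trans (h e)); last first.
    by apply: (@bigmax_sup _ e) => //; apply: He.
  rewrite -(prednK (h_pos e)) ltnS; apply/bigmax_leqP => m Hm.
  rewrite -ltnS (prednK (h_pos e)); apply: h_lt.
  by apply/existsP; exists d; apply/existsP; exists r; rewrite /inT Hd Hr Hm.
rewrite /mu (bigD1 d0) //= [X in _ < X](bigD1 d0) //= -addSn; apply: leq_add.
  by rewrite /fire ffunE Hd0; apply: Hlt.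
apply: leq_sum => d _; rewrite /fire ffunE; case: ifP => Hd //.
exact: ltnW (Hlt d Hd).
Qed.

Lemma enabled_xf s z m : occurs N xF s z -> enabled N z m -> False.
Proof.
have [d Hd] := pick_party m.
case: s => [|[e r] s] /=.
  by move=> -> /(_ d Hd); rewrite /xf ffunE inE.
have [d' Hd'] := pick_party e.
by case=> /(_ d' Hd'); rewrite /xf ffunE inE.
Qed.

Section Multi.
Variable n : Nt.
Hypothesis Hn2 : 1 < #|R N n|.
Definition after f := exists u, gedge N n u /\ connect (gedge N) u f.
Hypothesis Hmax : forall f, after f -> #|R N f| <= 1.
Hypothesis Hnf : n != nf N.
Variables (sx : seq (Nt * Out)) (x' : marking A Nt).
Hypothesis Hx' : occurs N (x0 N) sx x'.
Hypothesis Hen : enabled N x' n.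
Hypothesis Honly : forall e, enabled N x' e -> e = n.

Notation y r := (fire N x' n r).

Lemma y_reach r : r \in R N n -> occurs N (x0 N) (sx ++ [:: (n, r)]) (y r).
Proof. by move=> Hr; apply/occurs_cat; exists x'; split => //=. Qed.

Lemma y_wf r : r \in R N n -> wf (y r).
Proof. by move/y_reach/reach_wf. Qed.

Definition Inv (z : marking A Nt) :=
  forall d, (d \notin P N n /\ z d = x' d) \/ (forall m, m \in z d -> after m).

Lemma Inv_y r : r \in R N n -> Inv (y r).
Proof.
move=> Hr d; rewrite /fire ffunE; case: ifP => Hd; last by left; split => //; apply/negbT.
right => m Hm; exists m; split => //.
by apply/existsP; exists d; apply/existsP; exists r; rewrite /inT Hd Hr Hm.
Qed.

Lemma after_fired z s w f rf : Inv z -> occurs N z s w -> (f, rf) \in s -> after f.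
Proof.
elim: s z => [|[e' r'] s IH] z //= Hz [He' Hr' Ho].
have Ha : after e'.
  case: (classic (after e')) => // Hna; exfalso.
  have Hl d : d \in P N e' -> d \notin P N n /\ z d = x' d.
    move=> Hd; case: (Hz d) => // Hr; exfalso; apply: Hna; apply: Hr; exact: He'.
  have He'x : enabled N x' e'.
    by move=> d Hd; case: (Hl d Hd) => _ <-; apply: He'.
  have [d Hd] := pick_party e'; case: (Hl d Hd) => /negP Hn _; apply: Hn.
  by rewrite -(Honly He'x).
rewrite inE => /orP [/eqP [-> _]|Hin] //.
apply: (IH _ _ Ho Hin) => d; rewrite /fire ffunE; case: ifP => Hd; last exact: Hz.
right => m Hm; case: Ha => u [Hnu Hue]; exists u; split => //.
apply: connect_trans Hue (connect1 _).
by apply/existsP; exists d; apply/existsP; exists r'; rewrite /inT Hd Hr' Hm.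
Qed.

Lemma after_neq f : after f -> f != n.
Proof.
case=> u [Hnu Huf]; apply/eqP => Efn; subst f.
by have := Hacyc Hnu; rewrite Huf.
Qed.

Definition H e := forall r' s', r' \in R N n -> occurs N (y r') s' xF ->
  e \in [seq p.1 | p <- s'].

Lemma src z s z' d m : occurs N z s z' -> m \in z' d ->
  m \in z d \/ exists f rf, [/\ (f, rf) \in s, d \in P N f, rf \in R N f &
     m \in X N f d rf].
Proof.
elim: s z => [|[e r] s IH] z /=; first by move=> -> ->; left.
case=> He Hr Ho Hm; case: (IH _ Ho Hm) => [|[f [rf [H1 H2 H3 H4]]]].
  rewrite /fire ffunE; case: ifP => Hd Hm'; last by left.
  by right; exists e, r; rewrite inE eqxx.
by right; exists f, rf; rewrite inE H1 orbT.
Qed.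

Lemma fired_map (s : seq (Nt * Out)) f rf : (f, rf) \in s -> f \in [seq p.1 | p <- s].
Proof. by move=> Hin; apply/mapP; exists (f, rf). Qed.

Lemma key r s e : r \in R N n -> occurs N (y r) s xF ->
  e \in [seq p.1 | p <- s] -> H e.
Proof.
move=> Hr Hs He; apply: NNPP => HnH.
have [g [[Hg HnHg] Hgmax]] := @ex_min _ (fun g => g \in [seq p.1 | p <- s] /\ ~ H g)
   (fun g => #|Nt| - h g) (ex_intro _ e (conj He HnH)).
clear e He HnH.
have Hbig f : f \in [seq p.1 | p <- s] -> E f g -> H f.
  move=> Hf Hfg; apply: NNPP => HnHf.
  have := Hgmax f (conj Hf HnHf); have := h_lt Hfg.
  have : h f <= #|Nt| by apply: max_card.
  lia.
case/mapP: Hg => [[g' rg] Hgin /= Eg]; subst g'.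
have Hag : after g := after_fired (Inv_y Hr) Hs Hgin.
have [s1 [s2 [z' [Hsplit Hs1 Heng Hrg Hs2]]]] := split_at Hs Hgin.
apply: (@sc n g r) => //; first by rewrite eq_sym after_neq.
  2: exact: Hmax.
have Hpar d : d \in P N g -> d \in P N n /\ X N n d r = [set g].
  move=> Hd; have Hgz := Heng d Hd.
  case: (src Hs1 Hgz) => [Hgy|[f [rf [Hf Hdf Hrf Hgx]]]].
    move: Hgy; rewrite /fire ffunE; case: ifP => Hdn Hgx.
      by split => //; apply: X_single Hdn Hr _ Hgx.
    exfalso; apply: HnHg => r' s' Hr' Hs'.
    have Hgy' : g \in y r' d by rewrite /fire ffunE Hdn.
    have [q [Hq _]] := tok (y_wf Hr') Hs' Hgy'.
    exact: fired_map Hq.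
  exfalso; apply: HnHg.
  have Hfg : E f g.
    by apply/existsP; exists d; apply/existsP; exists rf; rewrite /inT Hdf Hrf Hgx.
  have HHf : H f.
    apply: Hbig Hfg; rewrite Hsplit map_cat mem_cat; apply/orP; left.
    exact: fired_map Hf.
  have Haf : after f.
    apply: (after_fired (Inv_y Hr) Hs (rf := rf)).
    by rewrite Hsplit mem_cat Hf.
  move=> r' s' Hr' Hs'.
  case/mapP: (HHf r' s' Hr' Hs') => [[f' rf'] Hfin /= Ef]; subst f'.
  have [t1 [t2 [w [Ets Ht1 Henf Hrf' Ht2]]]] := split_at Hs' Hfin.
  have Erf : rf' = rf by apply: (card_le1_eqP (Hmax Haf)).
  subst rf'.
  have Hw : wf (fire N w f rf).
    apply: fire_wf => //; apply: occurs_wf Ht1; exact: y_wf.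
  have Hgw : g \in fire N w f rf d by rewrite /fire ffunE Hdf.
  have [q [Hq _]] := tok Hw Ht2 Hgw.
  rewrite Ets map_cat mem_cat /= inE; apply/orP; right; apply/orP; right.
  exact: fired_map Hq.
split.
  by apply/subsetP => d /Hpar [].
by move=> d /Hpar [].
Qed.

Lemma multi_false : False.
Proof.
case/card_gt1P: Hn2 => r1 [r2 [Hr1 Hr2 Hne]].
apply: Hnomerge; exists n, r1, r2; split => // b Hb.
have Hne0 r : r \in R N n -> X N n b r != set0.
  by move=> Hr; rewrite (X_empty Hb Hr).
case/set0Pn: (Hne0 _ Hr1) => t1 Ht1; case/set0Pn: (Hne0 _ Hr2) => t2 Ht2.
rewrite (X_single Hb Hr1 Ht1) (X_single Hb Hr2 Ht2).
have [c1 Hc1] := cont (y_reach Hr1); have [c2 Hc2] := cont (y_reach Hr2).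
have conn ra rb ta tb ca cb : ra \in R N n -> rb \in R N n ->
    ta \in X N n b ra -> tb \in X N n b rb ->
    occurs N (y ra) ca xF -> occurs N (y rb) cb xF -> connect E tb ta.
  move=> Hra Hrb Hta Htb Hca Hcb.
  have Hty : ta \in y ra b by rewrite /fire ffunE Hb.
  have [q [Hq Hbt]] := tok (y_wf Hra) Hca Hty.
  have HH := key Hra Hca (fired_map Hq).
  case/mapP: (HH rb cb Hrb Hcb) => [[ta' q'] Hin /= Eq]; subst ta'.
  have [m Hm Hc] := path_to Hcb Hin Hbt.
  move: Hm; rewrite /fire ffunE Hb (X_single Hb Hrb Htb) in_set1 => /eqP Em.
  by subst m.
by rewrite (acyc_eq (conn _ _ _ _ _ _ Hr1 Hr2 Ht1 Ht2 Hc1 Hc2)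
                    (conn _ _ _ _ _ _ Hr2 Hr1 Ht2 Ht1 Hc2 Hc1)).
Qed.
End Multi.

Lemma wf_eq z d m1 m2 : wf z -> m1 \in z d -> m2 \in z d -> m1 = m2.
Proof.
move=> Hz H1 H2; move: (Hz d); rewrite leq_eqVlt ltnS leqn0 cards_eq0.
case/orP => [/cards1P [k Ek]|/eqP E0]; last by move: H1; rewrite E0 inE.
by move: H1 H2; rewrite Ek !in_set1 => /eqP -> /eqP ->.
Qed.

Lemma no_multi m : #|R N m| <= 1.
Proof.
case: (leqP #|R N m| 1) => // Hm; exfalso.
have [n [Hn Hmin]] := @ex_min _ (fun m => 1 < #|R N m|) h (ex_intro _ m Hm).
have Hmax f : after n f -> #|R N f| <= 1.
  case=> u [Hnu Huf]; case: (leqP #|R N f| 1) => // Hf.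
  have := Hmin f Hf; have := h_le Huf; have := h_lt Hnu; lia.
have Hnf : n != nf N.
  apply/negP => /eqP En; apply: Hnomerge.
  case/card_gt1P: Hn => r1 [r2 [Hr1 Hr2 Hne]]; exists n, r1, r2; split => // a Ha.
  move: (X_empty Ha Hr1) (X_empty Ha Hr2); rewrite En eqxx => /eqP -> /eqP ->.
  by [].
have [x' [[[sx Hx'] Hen] Hminx]] := @ex_min _
   (fun z => (exists s, occurs N (x0 N) s z) /\ enabled N z n) mu
   (let: ex_intro s (ex_intro z (conj H1 H2)) := proj1 Hsound n in
      ex_intro _ z (conj (ex_intro _ s H1) H2)).
have Honly e : enabled N x' e -> e = n.
  move=> He; apply: NNPP => Hen'.
  have [r Hr] := pick_out e.
  have Hreach : occurs N (x0 N) (sx ++ [:: (e, r)]) (fire N x' e r).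
    by apply/occurs_cat; exists x'; split => //=.
  have Hen2 : enabled N (fire N x' e r) n.
    move=> d Hd; rewrite /fire ffunE; case: ifP => Hde; last exact: Hen.
    exfalso; apply: Hen'; exact: (wf_eq (reach_wf Hx') (He d Hde) (Hen d Hd)).
  have := Hminx _ (conj (ex_intro _ (sx ++ [:: (e, r)]) Hreach) Hen2); have := mu_fire He Hr; lia.
exact: (multi_false Hn Hmax Hnf Hx' Hen Honly).
Qed.

Lemma fire_n0_nf r : n0 N = nf N -> r \in R N (n0 N) -> fire N (x0 N) (n0 N) r = xF.
Proof.
move=> E Hr; apply/ffunP => d; rewrite !ffunE P_n0.
by apply/eqP; rewrite (X_empty (P_n0 N d) Hr) E.
Qed.

Lemma nf_case : n0 N = nf N -> forall m, m = n0 N.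
Proof.
move=> E m; have [s [z [Hoc Hen]]] := proj1 Hsound m.
case: s Hoc => [|[e r] s] /= Hoc.
  have [d Hd] := pick_party m; move: (Hen d Hd); rewrite Hoc ffunE in_set1.
  by move/eqP.
case: Hoc => He Hr Ho.
have [d Hd] := pick_party e; move: (He d Hd); rewrite ffunE in_set1 => /eqP Ee.
subst e; rewrite (fire_n0_nf E Hr) in Ho.
by case: (enabled_xf Ho Hen).
Qed.

Lemma single_case : n0 N != nf N -> False.
Proof.
move=> Hne; have [r Hr] := pick_out (n0 N).
have Hy : occurs N (x0 N) [:: (n0 N, r)] (fire N (x0 N) (n0 N) r).
  split => //= d _; rewrite ffunE in_set1 //.
have [[|[e re] s'] Hs'] := cont Hy.
  move: Hs' => /= Hs'.
  have /card_gt0P [d _] := agents_nonempty N.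
  move: (f_equal (fun z : marking A Nt => z d) Hs').
  rewrite /xf /fire !ffunE P_n0 => /esym/eqP.
  by rewrite (X_empty (P_n0 N d) Hr) (negbTE Hne).
case: Hs' => He Hre _.
have Hpar d : d \in P N e -> X N (n0 N) d r = [set e].
  move=> Hd; move: (He d Hd); rewrite ffunE P_n0 => Hin.
  exact: X_single (P_n0 N d) Hr _ Hin.
apply: (@sc (n0 N) e r) => //; last exact: no_multi.
  apply/eqP => Ene; have [d Hd] := pick_party e.
  have Hg : E (n0 N) e.
    apply/existsP; exists d; apply/existsP; exists r.
    by rewrite /inT (P_n0 N d) Hr (Hpar d Hd) in_set1 eqxx.
  by have := Hacyc Hg; rewrite Ene connect0.
split; last exact: Hpar.
by apply/subsetP => d _; rewrite P_n0.
Qed.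

End S.

Theorem theorem5 (A Nt Out : finType) (Qa : A -> Type)
    (N : @negotiation A Nt Out Qa) :
  SDAN N -> irreducible N -> #|Nt| = 1.
Proof.
case=> Hs Hd Ha [Hm Hsc].
case: (eqVneq (n0 N) (nf N)) => [E0|Hne].
  apply: (@eq_card1 _ (n0 N)) => m; rewrite !inE.
  by rewrite (nf_case Hs E0 m) eqxx.
by case: (single_case Hd Ha Hs Hm Hsc Hne).
Qed.
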